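(* Let $f:\{0,1\}^n\to\{0,1\}$ be $\epsilon$-far from being $t$-symmetric. Then every $J\subseteq[n]$ with $|J|\ge t$ satisfies $\mathrm{SymInf}_f(J)\ge\epsilon$.
   Context: $\mathcal{S}_J$ is the set of permutations of $[n]$ fixing every element outside $J$; $\pi x$ is the vector whose $\pi(i)$-th coordinate is $x_i$. $f$ is $J$-symmetric if $f(\pi x)=f(x)$ for all $x$, $\pi\in\mathcal{S}_J$; $t$-symmetric if $J$-symmetric for some $|J|\ge t$. $f$ is $\epsilon$-far from being $t$-symmetric if $\Pr_x[f(x)\ne g(x)]\ge\epsilon$ for all $t$-symmetric $g$. $\mathrm{SymInf}_f(J)=\Pr_{x,\pi}[f(x)\ne f(\pi x)]$, $x$ uniform in $\{0,1\}^n$, $\pi$ uniform in $\mathcal{S}_J$. *)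

(* Defs.v *)
From mathcomp Require Import all_boot all_order all_fingroup all_algebra.
Set Implicit Arguments. Unset Strict Implicit. Unset Printing Implicit Defensive.
Import GRing.Theory Num.Theory.
Local Open Scope ring_scope.

Definition cube (n : nat) := {ffun 'I_n -> bool}.

Definition SJ (n : nat) (J : {set 'I_n}) : {set {perm 'I_n}} :=
  [set s : {perm 'I_n} | [forall i, (i \notin J) ==> (s i == i)]].

(* pi x : the vector whose pi(i)-th coordinate is x_i, i.e. (pi x)_j = x_{pi^-1 j}. *)
Definition permvec (n : nat) (s : {perm 'I_n}) (x : cube n) : cube n :=
  [ffun j => x ((s^-1)%g j)].

Definition Jsym (n : nat) (J : {set 'I_n}) (f : cube n -> bool) : Prop :=
  forall (x : cube n) (s : {perm 'I_n}), s \in SJ J -> f (permvec s x) = f x.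

Definition tsym (n t : nat) (f : cube n -> bool) : Prop :=
  exists J : {set 'I_n}, (t <= #|J|)%N /\ Jsym J f.

Definition dist (R : numFieldType) (n : nat) (f g : cube n -> bool) : R :=
  #|[set x : cube n | f x != g x]|%:R / #|{: cube n}|%:R.

Definition far_tsym (R : numFieldType) (n t : nat) (f : cube n -> bool) (eps : R) : Prop :=
  forall g : cube n -> bool, tsym t g -> eps <= dist R f g.

Definition SymInf (R : numFieldType) (n : nat) (f : cube n -> bool) (J : {set 'I_n}) : R :=
  #|[set p : cube n * {perm 'I_n} | (p.2 \in SJ J) && (f p.1 != f (permvec p.2 p.1))]|%:R
  / (#|{: cube n}| * #|SJ J|)%:R.

(* Main.v *)
Require Import Defs.
From mathcomp Require Import ring lra.
From mathcomp Require Import all_boot all_order all_fingroup all_algebra.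
Import Order.TTheory GRing.Theory Num.Theory.
Local Open Scope ring_scope.

Section H.
Variable n : nat.
Implicit Types (J : {set 'I_n}) (s t : {perm 'I_n}) (x : cube n).

Lemma SJ1 J : (1%g : {perm 'I_n}) \in SJ J.
Proof. by rewrite inE; apply/forallP => i; rewrite perm1 eqxx implybT. Qed.

Lemma SJM J s t : s \in SJ J -> t \in SJ J -> (s * t)%g \in SJ J.
Proof.
rewrite !inE => /forallP Hs /forallP Ht; apply/forallP => i; apply/implyP => Hi.
by rewrite permM (eqP (implyP (Hs i) Hi)) (eqP (implyP (Ht i) Hi)).
Qed.

Lemma SJV J s : s \in SJ J -> (s^-1)%g \in SJ J.
Proof.
rewrite !inE => /forallP Hs; apply/forallP => i; apply/implyP => Hi.
have := eqP (implyP (Hs i) Hi) => e.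
by apply/eqP; rewrite -{1}e permK.
Qed.

Lemma permvecM s t x : permvec s (permvec t x) = permvec (t * s)%g x.
Proof. by apply/ffunP => j; rewrite !ffunE invMg permM. Qed.

Lemma permvec1 x : permvec 1%g x = x.
Proof. by apply/ffunP => j; rewrite !ffunE invg1 perm1. Qed.

Lemma sum_pv (R : numFieldType) (F : cube n -> R) s :
  \sum_x F (permvec s x) = \sum_x F x.
Proof.
symmetry; apply: (reindex_inj (h := permvec s)).
move=> x y e; have := congr1 (permvec (s^-1)%g) e.
by rewrite !permvecM mulgV !permvec1.
Qed.

Lemma sum_SM (R : numFieldType) J (F : {perm 'I_n} -> R) s : s \in SJ J ->
  \sum_(p in SJ J) F (s * p)%g = \sum_(p in SJ J) F p.
Proof.
move=> Hs; rewrite [RHS]big_mkcond [LHS]big_mkcond.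
rewrite [RHS](reindex_inj (h := mulg s) (@mulgI _ s)) /=.
apply: eq_bigr => p _.
have -> : (s * p)%g \in SJ J = (p \in SJ J); last by [].
apply/idP/idP => [H|H]; last exact: SJM _ _ _ Hs H.
by have := SJM _ _ _ (SJV _ _ Hs) H; rewrite mulKg.
Qed.

Lemma card_setE (T : finType) (P : pred T) : #|[set x | P x]| = (\sum_x P x)%N.
Proof.
rewrite -sum1_card big_mkcond /=; apply: eq_bigr => x _.
by rewrite inE; case: (P x).
Qed.

Lemma pair_id (R : realFieldType) J (a : {perm 'I_n} -> bool) :
  \sum_(s in SJ J) \sum_(t in SJ J) ((a s != a t) : nat)%:R =
  2 * (\sum_(s in SJ J) (a s : nat)%:R) * (#|SJ J|%:R - \sum_(s in SJ J) (a s : nat)%:R) :> R.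
Proof.
have E : forall b c : bool, ((b != c) : nat)%:R =
   (b:nat)%:R + (c:nat)%:R - 2 * (b:nat)%:R * (c:nat)%:R :> R.
  by case; case => /=; rewrite ?mulr0 ?mul0r ?mulr1 ?subr0 ?add0r ?addr0 //; ring.
pose N : R := \sum_(s in SJ J) (a s : nat)%:R.
transitivity (\sum_(s in SJ J) ((a s : nat)%:R *+ #|SJ J| + N - 2 * (a s : nat)%:R * N) : R).
  apply: eq_bigr => s _.
  rewrite (eq_bigr _ (fun t _ => E (a s) (a t))).
  by rewrite sumrB big_split /= !sumr_const mulr_sumr.
rewrite sumrB big_split /= sumr_const sumrMnl -/N.
have -> : \sum_(s in SJ J) 2 * (a s : nat)%:R * N = 2 * N * N :> R.
  by rewrite -mulr_suml -mulr_sumr.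
rewrite -[N *+ _]mulr_natr; ring.
Qed.
End H.

Theorem corollary1 (R : realFieldType) (n t : nat) (f : cube n -> bool) (eps : R) :
  far_tsym t f eps ->
  forall J : {set 'I_n}, (t <= #|J|)%N -> eps <= SymInf R f J.
Proof.
move=> Hfar J HJ.
pose S := SJ J.
pose M : R := #|S|%:R.
pose N x : R := \sum_(p in S) (f (permvec p x) : nat)%:R.
pose g x := M <= 2 * N x.
have NS : forall s x, s \in S -> N (permvec s x) = N x.
  move=> s x Hs; rewrite /N.
  under eq_bigr => p _ do rewrite permvecM.
  by rewrite (sum_SM _ _ _ (fun q => (f (permvec q x) : nat)%:R) _ Hs).
have gsym : Jsym J g by move=> x s Hs; rewrite /g NS.
have Hd := Hfar g (ex_intro _ J (conj HJ gsym)).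
apply: (le_trans Hd).
pose D x : R := \sum_(p in S) ((f x != f (permvec p x)) : nat)%:R.
pose m x : R := if g x then M - N x else N x.
have Mpos : 0 < M.
  by rewrite ltr0n card_gt0; apply/set0Pn; exists 1%g; apply: SJ1.
have NM : forall x, 0 <= N x <= M.
  move=> x; apply/andP; split; first by apply: sumr_ge0 => *; rewrite ler0n.
  rewrite /M -sumr_const; apply: ler_sum => p _; by case: (f _); rewrite /= ?ler01.
have cardA : #|[set p : cube n * {perm 'I_n} | (p.2 \in SJ J) && (f p.1 != f (permvec p.2 p.1))]|%:R
   = \sum_x D x :> R.
  rewrite card_setE pair_big /= natr_sum [RHS]big_mkcond /=; apply: eq_bigr => q _; by case: (q.2 \in _).

have A2 : (\sum_x D x) * M = \sum_x 2 * N x * (M - N x).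
  rewrite /M mulr_natr -sumr_const.
  rewrite (eq_bigr (fun s => \sum_x D (permvec s x))); last first.
    by move=> s _; rewrite (sum_pv _ _ D).
  rewrite exchange_big /=; apply: eq_bigr => x _.
  rewrite /D.
  rewrite (eq_bigr (fun s => \sum_(p in S) ((f (permvec s x) != f (permvec p x)) : nat)%:R)); last first.
    move=> s Hs.
    under eq_bigr => p _ do rewrite permvecM.
    by rewrite (sum_SM _ _ _ (fun q => ((f (permvec s x) != f (permvec q x)) : nat)%:R) _ Hs).
  exact: (pair_id _ _ _ (fun p => f (permvec p x))).
have B : #|[set x | f x != g x]|%:R * M = \sum_x m x.
  rewrite card_setE natr_sum /M mulr_natr -sumr_const.
  rewrite (eq_bigr (fun s => \sum_x ((f (permvec s x) != g (permvec s x)) : nat)%:R)); last first.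
    by move=> s _; rewrite (sum_pv _ _ (fun x => ((f x != g x) : nat)%:R)).
  rewrite exchange_big /=; apply: eq_bigr => x _.
  rewrite (eq_bigr (fun s => ((f (permvec s x) != g x) : nat)%:R)); last first.
    by move=> s Hs; rewrite gsym.
  rewrite /m /N; case: (g x).
    have -> : M = \sum_(s in S) (1 : R) by rewrite sumr_const.
    rewrite -sumrB; apply: eq_bigr => s _; by case: (f _) => /=; rewrite ?subrr ?subr0.
  by apply: eq_bigr => s _; case: (f _).
have C : forall x, M * m x <= 2 * N x * (M - N x).
  move=> x; have /andP [N0 NM'] := NM x; rewrite /m /g.
  case: ifP => H; nra.
have Kpos : 0 < #|{: cube n}|%:R :> R.
  rewrite ltr0n; apply/card_gt0P; by exists [ffun=> false].
have E1 : #|[set x | f x != g x]|%:R * M <= \sum_x D x.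
  rewrite -(ler_pM2r Mpos) B A2 mulr_suml; apply: ler_sum => x _; rewrite mulrC; exact: C.
rewrite /dist /SymInf cardA natrM invfM mulrA [X in _ <= X]mulrAC.
apply: ler_wpM2r; first by rewrite invr_ge0 ltW.
by rewrite ler_pdivlMr.
Qed.
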